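(* Assume $\mathbf 1\in\Sigma^\circ$. Let $\mathbf t\in\mathcal V$ and $c^*\in\mathbb R$ be such that $\mathbf t-c^*\mathbf 1$ lies on the boundary of $\Sigma$, let $c<c^*$, and let $\mathbf y$ denote the gradient certificate of $\mathbf t-c\mathbf 1$. Then there exists a constant $C>0$, depending only on the operator $\Lambda$ (and not on $\mathbf t$ or $c$), such that \[ c^*-c\ \le\ \left(C\,\|\mathbf 1\|^*_{\mathbf y}\right)^{-1}. \]
   Context: Fix nonzero real polynomials $g_1,\dots,g_m$ in $n$ variables and nonnegative integers $d_1,\dots,d_m$. Let $\mathcal V$ be the real vector space of polynomials $\sum_{i=1}^m g_i r_i$ with $\deg r_i\le 2d_i$, and $\Sigma\subseteq\mathcal V$ the cone of weighted sums of squares $\sum_i g_i\sigma_i$ with each $\sigma_i$ a sum of squares of polynomials of degree at most $d_i$; assume $\Sigma$ is a proper cone. Fix a basis $\mathbf q=(q_1,\dots,q_U)$ of $\mathcal V$, identify $\mathcal V$ and its dual with $\mathbb R^U$ with the standard inner product and Euclidean norm $\|\cdot\|$; $\Sigma^*$ is the dual cone, $K^\circ$ the interior of $K$; $\mathbf 1$ is the coefficient vector of the constant polynomial $1$. For each $i$ fix a basis $\mathbf p_i$ (of size $L_i$) of polynomials of degree at most $d_i$ and let $\Lambda_i:\mathbb R^U\to\mathbb S^{L_i}$ be the unique linear map with $\sum_u q_u\Lambda_i(\mathbf e_u)=g_i\mathbf p_i\mathbf p_i^T$; $\Lambda=\Lambda_1\oplus\cdots\oplus\Lambda_m$ (block diagonal),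 $\Lambda^*$ its adjoint; $(\Sigma^* )^\circ=\{\mathbf x:\Lambda(\mathbf x)\succ0\}$. On $(\Sigma^* )^\circ$ let $f(\mathbf x)=-\ln\det\Lambda(\mathbf x)$, with gradient $g(\mathbf x)=-\Lambda^*(\Lambda(\mathbf x)^{-1})$ and Hessian $H(\mathbf x)\mathbf w=\Lambda^*(\Lambda(\mathbf x)^{-1}\Lambda(\mathbf w)\Lambda(\mathbf x)^{-1})$. Dual local norm $\|\mathbf s\|^*_{\mathbf x}=\|H(\mathbf x)^{-1/2}\mathbf s\|$. For $\mathbf s\in\Sigma^\circ$, the gradient certificate of $\mathbf s$ is the unique $\mathbf y\in(\Sigma^* )^\circ$ with $-g(\mathbf y)=\mathbf s$. *)

(* Defs.v *)
From HB Require Import structures.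
From mathcomp Require Import all_boot all_order all_algebra.
From mathcomp Require Import mpoly.
From mathcomp Require Import reals.
Set Implicit Arguments. Unset Strict Implicit. Unset Printing Implicit Defensive.
Import Order.TTheory GRing.Theory Num.Theory.
Local Open Scope ring_scope.

Section Defs.
Variable R : realType.

(* total degree at most d  (msize p = 1 + total degree, msize 0 = 0) *)
Definition deg_le (n : nat) (p : {mpoly R[n]}) (d : nat) : Prop := (msize p <= d.+1)%N.

Definition sos_le (n : nat) (d : nat) (s : {mpoly R[n]}) : Prop :=
  exists hs : seq {mpoly R[n]},
    (forall h, h \in hs -> deg_le h d) /\ s = \sum_(h <- hs) h ^+ 2.

Definition inV (n m : nat) (g : 'I_m -> {mpoly R[n]}) (d : 'I_m -> nat)
  (f : {mpoly R[n]}) : Prop :=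
  exists r : 'I_m -> {mpoly R[n]},
    (forall i, deg_le (r i) (2 * d i)) /\ f = \sum_(i < m) g i * r i.

Definition inWSOS (n m : nat) (g : 'I_m -> {mpoly R[n]}) (d : 'I_m -> nat)
  (f : {mpoly R[n]}) : Prop :=
  exists sg : 'I_m -> {mpoly R[n]},
    (forall i, sos_le (d i) (sg i)) /\ f = \sum_(i < m) g i * sg i.

Definition polyOf (n U : nat) (q : 'I_U -> {mpoly R[n]}) (x : 'cV[R]_U) : {mpoly R[n]} :=
  \sum_(u < U) x u 0 *: q u.

Definition is_basis (n U : nat) (P : {mpoly R[n]} -> Prop) (q : 'I_U -> {mpoly R[n]}) : Prop :=
  [/\ forall u, P (q u),
      forall x : 'cV[R]_U, polyOf q x = 0 -> x = 0
    & forall f, P f -> exists x : 'cV[R]_U, f = polyOf q x].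

Definition norm2 (U : nat) (v : 'cV[R]_U) : R := Num.sqrt (\sum_(u < U) v u 0 ^+ 2).

Definition interiorP (U : nat) (K : 'cV[R]_U -> Prop) (x : 'cV[R]_U) : Prop :=
  exists2 e : R, 0 < e & forall z, norm2 (z - x) < e -> K z.

Definition closureP (U : nat) (K : 'cV[R]_U -> Prop) (x : 'cV[R]_U) : Prop :=
  forall e : R, 0 < e -> exists z, K z /\ norm2 (z - x) < e.

Definition boundaryP (U : nat) (K : 'cV[R]_U -> Prop) (x : 'cV[R]_U) : Prop :=
  closureP K x /\ ~ interiorP K x.

Definition proper_cone (U : nat) (K : 'cV[R]_U -> Prop) : Prop :=
  [/\ forall x y, K x -> K y -> K (x + y),
      forall (a : R) x, 0 <= a -> K x -> K (a *: x),
      forall x, closureP K x -> K x,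
      forall x, K x -> K (- x) -> x = 0
    & exists x, interiorP K x].

Definition posdef (L : nat) (M : 'M[R]_L) : Prop :=
  M^T = M /\ forall v : 'cV[R]_L, v != 0 -> 0 < (v^T *m M *m v) 0 0.

Definition LamB (U m : nat) (L : 'I_m -> nat)
  (Lam : forall i : 'I_m, 'cV[R]_U -> 'M[R]_(L i)) (x : 'cV[R]_U)
  : 'M[R]_(\sum_(i < m) L i) := \mxdiag_(i < m) Lam i x.

(* adjoint of a linear map A : R^U -> S^N w.r.t. the standard / trace inner products *)
Definition adjoint (U N : nat) (A : 'cV[R]_U -> 'M[R]_N) (S : 'M[R]_N) : 'cV[R]_U :=
  \col_(u < U) \tr (A (delta_mx u 0) *m S).

Definition grad (U N : nat) (A : 'cV[R]_U -> 'M[R]_N) (x : 'cV[R]_U) : 'cV[R]_U :=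
  - adjoint A (invmx (A x)).

(* Hessian H(x), as the U x U matrix whose v-th column is H(x) e_v,
   H(x) w = Lambda^*(Lambda(x)^{-1} Lambda(w) Lambda(x)^{-1}) *)
Definition hess (U N : nat) (A : 'cV[R]_U -> 'M[R]_N) (x : 'cV[R]_U) : 'M[R]_U :=
  \matrix_(u < U, v < U)
     adjoint A (invmx (A x) *m A (delta_mx v 0) *m invmx (A x)) u 0.

(* dual local norm ||s||*_x = ||H(x)^{-1/2} s|| = sqrt (s^T H(x)^{-1} s) *)
Definition dual_norm (U N : nat) (A : 'cV[R]_U -> 'M[R]_N) (x s : 'cV[R]_U) : R :=
  Num.sqrt ((s^T *m invmx (hess A x) *m s) 0 0).

End Defs.

(* Main.v *)
Require Import Defs.
From HB Require Import structures.
From mathcomp Require Import all_boot all_order all_algebra.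
From mathcomp Require Import mpoly.
From mathcomp Require Import reals.
Import Order.TTheory GRing.Theory Num.Theory.
Local Open Scope ring_scope.
Set Implicit Arguments. Unset Strict Implicit. Unset Printing Implicit Defensive.
From mathcomp Require Import ring lra.



Lemma cs (R : realType) (I : finType) (a b : I -> R) :
  (\sum_i a i * b i) ^+ 2 <= (\sum_i a i ^+ 2) * (\sum_i b i ^+ 2).
Proof.
have key : \sum_i \sum_j (a i * b j - a j * b i) ^+ 2 =
   2 * ((\sum_i a i ^+ 2) * (\sum_i b i ^+ 2) - (\sum_i a i * b i) ^+ 2).
  have E : forall i j, (a i * b j - a j * b i) ^+ 2 =
     a i ^+ 2 * b j ^+ 2 + b i ^+ 2 * a j ^+ 2 - 2 * ((a i * b i) * (a j * b j)).
    by move=> i j; ring.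
  under eq_bigr => i _ do under eq_bigr => j _ do rewrite E.
  under eq_bigr => i _ do rewrite sumrB big_split /= -!mulr_sumr.
  rewrite sumrB big_split /= -!mulr_sumr -!mulr_suml.
  ring.
 
have : 0 <= \sum_i \sum_j (a i * b j - a j * b i) ^+ 2.
  by apply: sumr_ge0 => i _; apply: sumr_ge0 => j _; exact: sqr_ge0.
rewrite key pmulr_rge0 // subr_ge0 //.
Qed.


Definition frob (R : realType) N (X : 'M[R]_N) := \sum_i \sum_j X i j ^+ 2.

Lemma frob_ge0 (R : realType) N (X : 'M[R]_N) : 0 <= frob X.
Proof. by apply: sumr_ge0 => i _; apply: sumr_ge0 => j _; exact: sqr_ge0. Qed.

Lemma frob_eq0 (R : realType) N (X : 'M[R]_N) : frob X = 0 -> X = 0.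
Proof.
move=> h; apply/matrixP => i j; rewrite mxE.
have h1 := psumr_eq0P (fun i _ => sumr_ge0 _ (fun j _ => sqr_ge0 (X i j))) h.
have h2 := psumr_eq0P (fun j _ => sqr_ge0 (X i j)) (h1 i isT).
by apply/eqP; rewrite -sqrf_eq0; apply/eqP; exact: h2.
Qed.

Lemma tr_sq (R : realType) N (X : 'M[R]_N) : X^T = X -> \tr (X *m X) = frob X.
Proof.
move=> XT; rewrite /mxtrace /frob; apply: eq_bigr => i _; rewrite mxE.
apply: eq_bigr => j _; rewrite expr2; congr (_ * _).
by rewrite -{1}XT mxE.
Qed.

Lemma tr_le (R : realType) N (X : 'M[R]_N) : (\tr X) ^+ 2 <= N%:R * frob X.
Proof.
have := cs (fun _ : 'I_N => 1) (fun i => X i i).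
rewrite /mxtrace; under eq_bigr do rewrite mul1r.
under [X in _ <= X * _]eq_bigr do rewrite expr1n.
rewrite sumr_const card_ord => h; apply: (le_trans h).
rewrite ler_wpM2l //.
rewrite /frob; apply: ler_sum => i _.
rewrite (bigD1 i) //= lerDl; apply: sumr_ge0 => j _; exact: sqr_ge0.
Qed.

Lemma quad_le (R : realType) N (X : 'M[R]_N) (a : 'cV[R]_N) :
  ((a^T *m X *m a) 0 0) ^+ 2 <= frob X * (\sum_i a i 0 ^+ 2) ^+ 2.
Proof.
have E : (a^T *m X *m a) 0 0 = \sum_(p : 'I_N * 'I_N) X p.1 p.2 * (a p.1 0 * a p.2 0).
  rewrite -(pair_bigA _ (fun i j => X i j * (a i 0 * a j 0))) /= mxE exchange_big /=; apply: eq_bigr => j _.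
  rewrite mxE mulr_suml; apply: eq_bigr => i _; rewrite !mxE; ring.
rewrite E; apply: (le_trans (cs _ _)).
rewrite /frob (pair_bigA _ (fun i j => X i j ^+ 2)) /=; apply: ler_wpM2l.
  by apply: sumr_ge0 => p _; exact: sqr_ge0.
rewrite -(pair_bigA _ (fun i j => (a i 0 * a j 0) ^+ 2)) /= expr2 big_distrlr /=.
rewrite le_eqVlt; apply/orP; left; apply/eqP.
apply: eq_bigr => i _; apply: eq_bigr => j _; ring.
Qed.
Definition lstar (R : realType) N U (A : 'cV[R]_U -> 'M[R]_N) (v : 'cV[R]_N) : 'cV[R]_U :=
  \col_(e < U) (v^T *m A (delta_mx e 0) *m v) 0 0.

Lemma lin0 (R : realType) N U (A : 'cV[R]_U -> 'M[R]_N)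
  (Alin : forall a x z, A (a *: x + z) = a *: A x + A z) : A 0 = 0.
Proof.
have h := Alin 1 0 0; rewrite !scale1r addr0 in h.
by have := congr1 (fun X => X - A 0) h; rewrite subrr addrK => <-.
Qed.

Lemma lin_sum (R : realType) N U (A : 'cV[R]_U -> 'M[R]_N)
  (Alin : forall a x z, A (a *: x + z) = a *: A x + A z)
  (I : Type) (r : seq I) (c : I -> R) (f : I -> 'cV[R]_U) :
  A (\sum_(i <- r) c i *: f i) = \sum_(i <- r) c i *: A (f i).
Proof.
elim: r => [|i r IH]; first by rewrite !big_nil lin0.
by rewrite !big_cons Alin IH.
Qed.

Lemma lin_expand (R : realType) N U (A : 'cV[R]_U -> 'M[R]_N)
  (Alin : forall a x z, A (a *: x + z) = a *: A x + A z) (w : 'cV[R]_U) :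
  A w = \sum_(e < U) w e 0 *: A (delta_mx e 0).
Proof.
rewrite {1}[w]matrix_sum_delta.
under eq_bigr => e _ do rewrite big_ord1.
by rewrite lin_sum.
Qed.

Lemma dotE (R : realType) U (x z : 'cV[R]_U) : (x^T *m z) 0 0 = \sum_e x e 0 * z e 0.
Proof. by rewrite mxE; apply: eq_bigr => e _; rewrite mxE. Qed.

Lemma pair_lstar (R : realType) N U (A : 'cV[R]_U -> 'M[R]_N)
  (Alin : forall a x z, A (a *: x + z) = a *: A x + A z) (w : 'cV[R]_U) v :
  (w^T *m lstar A v) 0 0 = (v^T *m A w *m v) 0 0.
Proof.
rewrite dotE (lin_expand Alin w) mulmx_sumr mulmx_suml summxE.
by apply: eq_bigr => e _; rewrite -scalemxAr -scalemxAl !mxE.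
Qed.
Lemma chol_step (R : realType) n (IH : forall M : 'M[R]_n, posdef M -> exists2 C : 'M_n, C \in unitmx & M = C^T *m C)
  (M : 'M[R]_(1 + n)) : posdef M -> exists2 C : 'M_(1 + n), C \in unitmx & M = C^T *m C.
Proof.
move=> [Msym Mpos].
have EM := @submxK _ 1 n 1 n M.
move: EM Msym Mpos.
set A := ulsubmx _; set B := ursubmx _; set Cc := dlsubmx _; set D := drsubmx _.
move=> EM; rewrite -EM => Msym Mpos.
move: Msym; rewrite tr_block_mx => /eq_block_mx [AT CT BT DT].
set a := A 0 0.
have Aa : A = a%:M by rewrite [LHS]mx11_scalar.
have apos : 0 < a.
  have := Mpos (col_mx (1%:M : 'M_1) (0 : 'cV_n)); rewrite col_mx_eq0 oner_eq0 /= => /(_ isT).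
  rewrite tr_col_mx mul_row_block !trmx0 trmx1 !mul0mx !addr0 !mul1mx mul_row_col mulmx0 addr0 mulmx1.
  by rewrite -/A.
have a0 : a != 0 by rewrite gt_eqF.
set S := D - a^-1 *: (B^T *m B).
set F := block_mx (1%:M : 'M_1) (a^-1 *: B) 0 (1%:M : 'M_n).
set Fi := block_mx (1%:M : 'M_1) (- (a^-1 *: B)) 0 (1%:M : 'M_n).
have FFi : F *m Fi = 1%:M.
  rewrite mulmx_block !mul1mx !mul0mx !mulmx1 !mulmx0 !addr0 add0r addNr.
  by rewrite -scalar_mx_block.
have MF : block_mx A B Cc D = F^T *m block_mx A 0 0 S *m F.
  rewrite tr_block_mx !trmx1 trmx0 !mulmx_block !mul1mx !mul0mx !mulmx0 !mulmx1.
  rewrite !addr0 !add0r; congr block_mx.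
  - by rewrite Aa mul_scalar_mx scalerA mulfV // scale1r.
  - by rewrite Aa mul_mx_scalar linearZ /= scalerA mulfV // scale1r BT.
  - rewrite Aa mul_mx_scalar linearZ /= -!scalemxAl !scalerA mulVf // scale1r linearZ /= -scalemxAl.
    by rewrite /S addrC subrK.
have Spd : posdef S.
  split.
    by rewrite /S linearB /= linearZ /= trmx_mul trmxK DT.
  move=> w w0.
  set v := Fi *m col_mx (0 : 'cV_1) w.
  have Fv : F *m v = col_mx 0 w by rewrite /v mulmxA FFi mul1mx.
  have v0 : v != 0.
    apply/eqP => v0; move: Fv; rewrite v0 mulmx0 => /esym/eqP.
    by rewrite col_mx_eq0 (negbTE w0) andbF.
  have := Mpos v v0; rewrite MF.
  have -> : v^T *m (F^T *m block_mx A 0 0 S *m F) *m v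
      = (F *m v)^T *m block_mx A 0 0 S *m (F *m v).
    by rewrite [(F *m v)^T]trmx_mul !mulmxA.
  rewrite Fv tr_col_mx mul_row_block trmx0 !mul0mx mulmx0 !add0r mul_row_col mulmx0 add0r.
  done.
have [C' C'u SC] := IH S Spd.
set G := block_mx ((Num.sqrt a)%:M : 'M_1) 0 0 C'.
exists (G *m F).
  rewrite unitmx_mul; apply/andP; split.
    rewrite unitmxE det_ublock det_scalar1 unitfE mulf_neq0 //.
      by rewrite gt_eqF // sqrtr_gt0.
    by rewrite -unitfE -unitmxE.
  by rewrite unitmxE det_ublock !det1 mulr1 unitr1.
rewrite MF trmx_mul !mulmxA; congr (_ *m _).
rewrite -!mulmxA; congr (_ *m _).
rewrite tr_block_mx !trmx0 mulmx_block !mulmx0 !mul0mx !addr0 add0r -SC.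
by rewrite tr_scalar_mx -scalar_mxM -expr2 sqr_sqrtr ?ltW // Aa.
Qed.

Lemma chol (R : realType) n (M : 'M[R]_n) : posdef M -> exists2 C : 'M_n, C \in unitmx & M = C^T *m C.
Proof.
elim: n M => [|n IH] M Mpd.
  exists 1%:M; first by rewrite unitmx1.
  by apply/matrixP => [[]].
exact: (@chol_step R n IH M Mpd).
Qed.


Lemma tr_lin1 (R : realType) N U (A : 'cV[R]_U -> 'M[R]_N)
  (Alin : forall a x z, A (a *: x + z) = a *: A x + A z) (P : 'M[R]_N) z :
  \tr (A z *m P) = \sum_e z e 0 * \tr (A (delta_mx e 0) *m P).
Proof.
rewrite (lin_expand Alin z) mulmx_suml raddf_sum; apply: eq_bigr => e _.
by rewrite /= -scalemxAl mxtraceZ.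
Qed.

Lemma hessQ (R : realType) N U (A : 'cV[R]_U -> 'M[R]_N)
  (Alin : forall a x z, A (a *: x + z) = a *: A x + A z) y z :
  (z^T *m hess A y *m z) 0 0 =
  \tr (A z *m invmx (A y) *m A z *m invmx (A y)).
Proof.
set W := invmx (A y).
have -> : A z *m W *m A z *m W = A z *m (W *m A z *m W) by rewrite !mulmxA.
rewrite (tr_lin1 Alin) mxE; apply: eq_bigr => u _.
rewrite mulrC; congr (_ * _).
have -> : A (delta_mx u 0) *m (W *m A z *m W) = (A (delta_mx u 0) *m W) *m (A z *m W)
  by rewrite !mulmxA.
rewrite mxtrace_mulC -mulmxA (tr_lin1 Alin) mxE.
apply: eq_bigr => v _.
by rewrite !mxE !mulmxA.
Qed.

Lemma sq_le (R : realType) (x c : R) : 0 <= c -> x ^+ 2 <= c ^+ 2 -> x <= c.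
Proof. move=> c0 h; nra. Qed.

Lemma core (R : realType) N U (A : 'cV[R]_U -> 'M[R]_N)
  (Alin : forall a x z, A (a *: x + z) = a *: A x + A z)
  (Asym : forall x, (A x)^T = A x)
  (Ainj : forall w, A w = 0 -> w = 0)
  (y : 'cV[R]_U) (Mpd : posdef (A y)) (one u : 'cV[R]_U) (vs ps : seq 'cV[R]_N)
  (Eu : u = \sum_(v <- vs) lstar A v) (Eone : one = \sum_(v <- ps) lstar A v)
  (one0 : one != 0) (r : R) (rpos : 0 < r)
  (Esu : adjoint A (invmx (A y)) - u = r *: one) :
  0 < dual_norm A y one /\ r * dual_norm A y one <= N%:R + Num.sqrt N%:R.
Proof.
have [C Cu MC] := chol Mpd.
set M := A y in MC *.
have Mu : M \in unitmx by rewrite MC unitmx_mul unitmx_tr Cu.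
set W := invmx M.
set Bm := (invmx C)^T.
have CtB : C^T *m Bm = 1%:M by rewrite /Bm -trmx_mul mulVmx // trmx1.
have BtC : Bm^T *m C = 1%:M by rewrite /Bm trmxK mulVmx.
have Bu : Bm \in unitmx by rewrite /Bm unitmx_tr unitmx_inv.
have Btu : Bm^T \in unitmx by rewrite unitmx_tr.
have WB : W = Bm^T *m Bm.
  rewrite /W -[RHS](mulKmx Mu).
  have -> : M *m (Bm^T *m Bm) = 1%:M.
    by rewrite MC -!mulmxA (mulmxA C) /Bm trmxK mulmxV // mul1mx -/Bm CtB.
  by rewrite mulmx1.
set X := fun Y : 'M[R]_N => Bm *m Y *m Bm^T.
have trWW : forall Y, \tr (Y *m W *m Y *m W) = \tr (X Y *m X Y).
  move=> Y; rewrite /X WB -!mulmxA [RHS]mxtrace_mulC.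
  by rewrite !mulmxA.
have trW : forall Y, \tr (Y *m W) = \tr (X Y).
  by move=> Y; rewrite /X WB -!mulmxA [RHS]mxtrace_mulC !mulmxA.
have Xsym : forall Y, Y^T = Y -> (X Y)^T = X Y.
  by move=> Y YT; rewrite /X !trmx_mul trmxK YT mulmxA.
have quadX : forall (Y : 'M[R]_N) (v : 'cV[R]_N), v^T *m Y *m v = (C *m v)^T *m X Y *m (C *m v).
  move=> Y v; rewrite /X trmx_mul !mulmxA -(mulmxA v^T C^T Bm) CtB mulmx1.
  by rewrite -(mulmxA _ Bm^T C) BtC mulmx1.
have quadM : forall v : 'cV[R]_N, v^T *m M *m v = (C *m v)^T *m (C *m v).
  by move=> v; rewrite MC trmx_mul !mulmxA.
have Xeq0 : forall Y, X Y = 0 -> Y = 0.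
  move=> Y h; have := congr1 (fun Z => invmx Bm *m Z *m invmx Bm^T) h.
  by rewrite /X !mulmxA mulVmx // mul1mx mulmxK // mulmx0 mul0mx.
set H := hess A y.
have HQ : forall z, (z^T *m H *m z) 0 0 = frob (X (A z)).
  by move=> z; rewrite hessQ // trWW tr_sq // Xsym.
have HQ0 : forall z : 'cV[R]_U, (z^T *m H *m z) 0 0 = 0 -> z = 0.
  by move=> z h; move: (HQ z); rewrite h => /esym /frob_eq0 /Xeq0 /Ainj.
have Hu : H \in unitmx.
  rewrite unitmxE unitfE; apply/negP => /det0P [v v0 vH].
  have : (v^T^T *m H *m v^T) 0 0 = 0 by rewrite trmxK vH mul0mx mxE.
  move/HQ0 => /(congr1 trmx); rewrite trmxK trmx0 => v00.
  by rewrite v00 eqxx in v0.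
set zz := invmx H *m one.
have Hz : H *m zz = one by rewrite /zz mulKVmx.
have oneQ : (one^T *m zz) 0 0 = frob (X (A zz)).
  rewrite -HQ.
  have E : forall z : 'cV[R]_U, (z^T *m H *m z)^T = z^T *m H^T *m z.
    by move=> z; rewrite !trmx_mul trmxK mulmxA.
  rewrite -[in LHS]Hz [(H *m zz)^T]trmx_mul -E mxE.
  done.
have zz0 : zz != 0.
  apply/eqP => h; move: Hz; rewrite h mulmx0 => e.
  by rewrite -e eqxx in one0.
set Q := frob (X (A zz)) in oneQ *.
have Qge0 : 0 <= Q by exact: frob_ge0.
have Qpos : 0 < Q.
  rewrite lt_def Qge0 andbT; apply/eqP => h; move/eqP: zz0; apply; apply: HQ0.
  by rewrite HQ.
have dnE : dual_norm A y one = Num.sqrt Q.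
  by rewrite /dual_norm -/H -mulmxA -/zz oneQ.
set s := adjoint A W.
have pairL : forall (w : 'cV[R]_U) (l : seq 'cV[R]_N),
    (w^T *m \sum_(v <- l) lstar A v) 0 0 = \sum_(v <- l) (v^T *m A w *m v) 0 0.
  move=> w l; rewrite mulmx_sumr summxE; apply: eq_bigr => v _.
  exact: pair_lstar.
have pairS : forall w : 'cV[R]_U, (w^T *m s) 0 0 = \tr (A w *m W).
  move=> w; rewrite (tr_lin1 Alin) dotE; apply: eq_bigr => e _.
  by rewrite mxE.
have lin00 : forall (w a b : 'cV[R]_U) (c : R),
    (w^T *m (a - c *: b)) 0 0 = (w^T *m a) 0 0 - c * (w^T *m b) 0 0.
  move=> w a b c; rewrite !dotE mulr_sumr -sumrB; apply: eq_bigr => e _.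
  by rewrite !mxE; ring.
have Eu' : u = s - r *: one by rewrite -Esu opprB addrC subrK.
have zone : (zz^T *m one) 0 0 = Q.
  by rewrite dotE -oneQ dotE; apply: eq_bigr => e _; rewrite mulrC.
have key : r * Q = \tr (X (A zz)) - (zz^T *m u) 0 0.
  have := lin00 zz s one r; rewrite -Eu' zone pairS trW => ->.
  by rewrite opprB addrC subrK.
have T1 : \tr (X (A zz)) <= Num.sqrt N%:R * Num.sqrt Q.
  apply: sq_le; first by rewrite mulr_ge0 ?sqrtr_ge0.
  by rewrite exprMn !sqr_sqrtr ?ler0n //; apply: tr_le.
have T2 : forall v : 'cV[R]_N,
    - (v^T *m A zz *m v) 0 0 <= Num.sqrt Q * (v^T *m M *m v) 0 0.
  move=> v; rewrite quadX quadM; set a := C *m v.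
  have Ea : (a^T *m a) 0 0 = \sum_i a i 0 ^+ 2.
    by rewrite dotE; apply: eq_bigr => i _; rewrite expr2.
  rewrite Ea; apply: sq_le.
    by rewrite mulr_ge0 ?sqrtr_ge0 //; apply: sumr_ge0 => i _; exact: sqr_ge0.
  by rewrite sqrrN exprMn sqr_sqrtr //; apply: quad_le.
have T3 : \sum_(v <- vs) (v^T *m M *m v) 0 0 <= N%:R.
  have := pairL y vs; rewrite -Eu Eu' lin00 pairS -/M mulmxV // mxtrace1 => <-.
  rewrite gerBl; apply: mulr_ge0; first exact: ltW.
  rewrite Eone pairL; apply: sumr_ge0 => p _.
  have [->|p0] := eqVneq p 0; first by rewrite trmx0 !mul0mx mxE.
  exact: ltW (Mpd.2 p p0).
have uz : (zz^T *m u) 0 0 = \sum_(v <- vs) (v^T *m A zz *m v) 0 0 by rewrite Eu pairL.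
have T4 : - (zz^T *m u) 0 0 <= Num.sqrt Q * N%:R.
  rewrite uz -sumrN; apply: (le_trans (ler_sum _ (fun v _ => T2 v))).
  by rewrite -mulr_sumr ler_wpM2l ?sqrtr_ge0.
have sQ : 0 < Num.sqrt Q by rewrite sqrtr_gt0.
rewrite dnE; split => //.
rewrite -(ler_pM2r sQ) -mulrA -expr2 sqr_sqrtr // key.
apply: (le_trans (lerD T1 T4)).
by rewrite le_eqVlt; apply/orP; left; apply/eqP; ring.
Qed.
Lemma mxdiag_scale (R : realType) m (L : 'I_m -> nat) (a : R) (B : forall i, 'M[R]_(L i)) :
  \mxdiag_i (a *: B i) = a *: \mxdiag_i B i.
Proof.
have -> : a *: \mxdiag_i B i =
   \mxblock_(j, k) (a *: (if j == k then conform_mx 0 (B j) else 0 : 'M[R]_(L j, L k))).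
  by apply/matrixP => i j; rewrite !mxE.
rewrite /mxdiag; apply/eq_mxblock => i j.
by case: eqVneq => [->|]; rewrite ?conform_mx_id ?scaler0.
Qed.

Definition padf (R : realType) m (L : 'I_m -> nat) (i : 'I_m) (x : 'cV[R]_(L i)) (j : 'I_m) : 'cV[R]_(L j) :=
  if (i =P j) is ReflectT e then ecast j' ('cV[R]_(L j')) e x else 0.

Lemma padf_id (R : realType) m (L : 'I_m -> nat) i (x : 'cV[R]_(L i)) : padf x i = x.
Proof.
rewrite /padf; case: eqP => // e.
by rewrite (eq_irrelevance e (erefl i)).
Qed.

Lemma padf_ne (R : realType) m (L : 'I_m -> nat) i (x : 'cV[R]_(L i)) j : i != j -> padf x j = 0.
Proof. by rewrite /padf; case: eqP. Qed.

Lemma quad_pad (R : realType) m (L : 'I_m -> nat) i (x : 'cV[R]_(L i)) (B : forall j, 'M[R]_(L j)) :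
  (\mxcol_j padf x j)^T *m \mxdiag_j B j *m \mxcol_j padf x j = x^T *m B i *m x.
Proof.
rewrite tr_mxcol mul_mxrow_mxdiag mul_mxrow_mxcol (bigD1 i) //= big1 ?addr0.
  by rewrite padf_id.
by move=> j ji; rewrite padf_ne 1?eq_sym // trmx0 !mul0mx.
Qed.
Lemma polyOf_lin (R : realType) n U (q : 'I_U -> {mpoly R[n]}) (a : R) (x z : 'cV[R]_U) :
  polyOf q (a *: x + z) = a *: polyOf q x + polyOf q z.
Proof.
rewrite /polyOf scaler_sumr -big_split; apply: eq_bigr => u _.
by rewrite !mxE scalerDl scalerA.
Qed.

Lemma polyOf0 (R : realType) n U (q : 'I_U -> {mpoly R[n]}) : polyOf q 0 = 0.
Proof. by rewrite /polyOf big1 // => u _; rewrite mxE scale0r. Qed.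

Lemma polyOf_add (R : realType) n U (q : 'I_U -> {mpoly R[n]}) (x z : 'cV[R]_U) :
  polyOf q (x + z) = polyOf q x + polyOf q z.
Proof. by rewrite -[x in LHS]scale1r polyOf_lin scale1r. Qed.

Lemma polyOf_sum (R : realType) n U (q : 'I_U -> {mpoly R[n]}) T (l : seq T) (f : T -> 'cV[R]_U) :
  polyOf q (\sum_(t <- l) f t) = \sum_(t <- l) polyOf q (f t).
Proof.
elim: l => [|t l IH]; first by rewrite !big_nil polyOf0.
by rewrite !big_cons polyOf_add IH.
Qed.

Lemma polyOf_inj (R : realType) n U (q : 'I_U -> {mpoly R[n]})
  (qb : forall x : 'cV[R]_U, polyOf q x = 0 -> x = 0) (x z : 'cV[R]_U) :
  polyOf q x = polyOf q z -> x = z.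
Proof.
move=> h; apply/eqP; rewrite -subr_eq0; apply/eqP/qb.
by rewrite -scaleN1r addrC polyOf_lin h scaleN1r addNr.
Qed.

Lemma polyOf_col (R : realType) n U (q : 'I_U -> {mpoly R[n]}) (f : 'I_U -> R) :
  polyOf q (\col_u f u) = \sum_u f u *: q u.
Proof. by apply: eq_bigr => u _; rewrite mxE. Qed.

Lemma quadE (R : realType) L (B : 'M[R]_L) (x : 'cV[R]_L) :
  (x^T *m B *m x) 0 0 = \sum_j \sum_k x j 0 * x k 0 * B j k.
Proof.
rewrite mxE exchange_big /=; apply: eq_bigr => k _.
rewrite mxE mulr_suml; apply: eq_bigr => j _; rewrite !mxE; ring.
Qed.

Lemma sq_poly (R : realType) n U L (q : 'I_U -> {mpoly R[n]}) (g : {mpoly R[n]})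
  (p : 'I_L -> {mpoly R[n]}) (Lam : 'cV[R]_U -> 'M[R]_L)
  (H5 : forall j k, \sum_(u < U) (Lam (delta_mx u 0)) j k *: q u = g * p j * p k)
  (x : 'cV[R]_L) :
  g * (polyOf p x) ^+ 2 = polyOf q (\col_u (x^T *m Lam (delta_mx u 0) *m x) 0 0).
Proof.
rewrite polyOf_col.
under [RHS]eq_bigr => u _ do rewrite quadE scaler_suml.
rewrite exchange_big /=.
under [RHS]eq_bigr => j _ do (under eq_bigr => i _ do rewrite scaler_suml; rewrite exchange_big /=).
rewrite /polyOf expr2 big_distrlr /= mulr_sumr; apply: eq_bigr => j _.
rewrite mulr_sumr; apply: eq_bigr => k _.
under eq_bigr => u _ do rewrite -scalerA.
rewrite -scaler_sumr H5.
by rewrite -!scalerAl -!scalerAr -?scalerAl scalerA !mulrA.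
Qed.

Lemma norm2_scale (R : realType) U (c : R) (w : 'cV[R]_U) : norm2 (c *: w) = `|c| * norm2 w.
Proof.
rewrite /norm2; under eq_bigr do rewrite mxE exprMn.
by rewrite -mulr_sumr sqrtrM ?sqr_ge0 // sqrtr_sqr.
Qed.

Lemma norm2_0 (R : realType) U : norm2 (0 : 'cV[R]_U) = 0.
Proof. by rewrite -(scale0r (0 : 'cV[R]_U)) norm2_scale normr0 mul0r. Qed.

Unset Implicit Arguments.

Theorem theorem2 (R : realType) (n m : nat)
  (g : 'I_m -> {mpoly R[n]}) (d : 'I_m -> nat)
  (U : nat) (q : 'I_U -> {mpoly R[n]})
  (L : 'I_m -> nat) (p : forall i : 'I_m, 'I_(L i) -> {mpoly R[n]})
  (Lam : forall i : 'I_m, 'cV[R]_U -> 'M[R]_(L i))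
  (one : 'cV[R]_U) :
  (forall i, g i != 0) ->
  is_basis (inV g d) q ->
  (forall i, is_basis (fun f => deg_le f (d i)) (p i)) ->
  (forall i (a : R) (x z : 'cV[R]_U), Lam i (a *: x + z) = a *: Lam i x + Lam i z) ->
  (forall i (j k : 'I_(L i)),
      \sum_(u < U) (Lam i (delta_mx u 0)) j k *: q u = g i * p i j * p i k) ->
  proper_cone (fun s => inWSOS g d (polyOf q s)) ->
  polyOf q one = 1 ->
  interiorP (fun s => inWSOS g d (polyOf q s)) one ->
  exists2 C : R, 0 < C &
    forall (t : 'cV[R]_U) (cstar c : R) (y : 'cV[R]_U),
      boundaryP (fun s => inWSOS g d (polyOf q s)) (t - cstar *: one) ->
      c < cstar ->
      posdef (LamB Lam y) ->
      - grad (LamB Lam) y = t - c *: one ->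
      cstar - c <= (C * dual_norm (LamB Lam) y one)^-1.
Proof.
move=> gnz [qmem qinj qspan] pb Llin H5 [Kadd Kscale Kcl Kpt Kint] pone [e epos Hint].
set A := LamB Lam.
set N := (\sum_i L i)%N.
have Alin : forall a x z, A (a *: x + z) = a *: A x + A z.
  move=> a x z; rewrite /A /LamB.
  rewrite (@eq_mxdiag _ _ L _ (fun i => a *: Lam i x + Lam i z)); last by move=> i; exact: Llin.
  by rewrite mxdiagD mxdiag_scale.
have symb : forall i u, (Lam i (delta_mx u 0))^T = Lam i (delta_mx u 0).
  move=> i u; apply/matrixP => j k; rewrite mxE.
  have : (\col_u0 (Lam i (delta_mx u0 0) k j)) = (\col_u0 (Lam i (delta_mx u0 0) j k)) :> 'cV[R]_U.
    apply: (polyOf_inj qinj); rewrite !polyOf_col !H5.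
    by rewrite -!mulrA [p i k * _]mulrC.
  by move/(congr1 (fun v : 'cV[R]_U => v u 0)); rewrite !mxE.
have Asym : forall x, (A x)^T = A x.
  move=> x; rewrite /A /LamB tr_mxdiag; apply: eq_mxdiag => i.
  rewrite (lin_expand (Llin i) x) raddf_sum /=; apply: eq_bigr => u _.
  by rewrite linearZ /= symb.
have repr : forall x, inWSOS g d (polyOf q x) ->
    exists vs : seq 'cV[R]_N, x = \sum_(v <- vs) lstar A v.
  move=> x [sg [sgs Ex]].
  have blk : forall i, exists vs : seq 'cV[R]_N,
      g i * sg i = polyOf q (\sum_(v <- vs) lstar A v).
    move=> i; have [hs [hdeg ->]] := sgs i.
    elim: hs hdeg => [|h hs IH] hdeg.
      by exists [::]; rewrite !big_nil mulr0 polyOf0.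
    have [vs Evs] : exists vs : seq 'cV[R]_N,
        g i * \sum_(h0 <- hs) h0 ^+ 2 = polyOf q (\sum_(v <- vs) lstar A v).
      by apply: IH => h' h'in; apply: hdeg; rewrite inE h'in orbT.
    case: (pb i) => _ _ pspan.
    have [xi Eh] := pspan h (hdeg h (mem_head _ _)).
    exists ((\mxcol_j padf xi j) :: vs).
    rewrite !big_cons mulrDr Evs polyOf_add; congr (_ + _).
    rewrite Eh (sq_poly (H5 i)); congr polyOf; apply/matrixP => u z.
    by rewrite /lstar [LHS]mxE [RHS]mxE /A /LamB quad_pad.
  have all : forall l : seq 'I_m, exists vs : seq 'cV[R]_N,
      \sum_(i <- l) g i * sg i = polyOf q (\sum_(v <- vs) lstar A v).
    elim => [|i l IH]; first by exists [::]; rewrite !big_nil polyOf0.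
    have [vs1 E1] := blk i; have [vs2 E2] := IH.
    by exists (vs1 ++ vs2); rewrite big_cons big_cat polyOf_add E1 E2.
  have [vs Evs] := all (index_enum 'I_m).
  by exists vs; apply: (polyOf_inj qinj); rewrite -Evs Ex.
have Kone : inWSOS g d (polyOf q one) by apply: Hint; rewrite subrr norm2_0.
have Ainj : forall w, A w = 0 -> w = 0.
  move=> w Aw0.
  have pairK : forall z, inWSOS g d (polyOf q z) -> (w^T *m z) 0 0 = 0.
    move=> z /repr [vs ->]; rewrite mulmx_sumr summxE big1 // => v _.
    by rewrite pair_lstar // Aw0 mulmx0 mul0mx mxE.
  set nw := norm2 w.
  have nw0 : 0 <= nw by rewrite /nw /norm2 sqrtr_ge0.
  set de := e / (nw + 1).
  have de0 : 0 < de by rewrite /de divr_gt0 // ltr_wpDl.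
  have h2 := pairK (one + de *: w).
  have Kz : inWSOS g d (polyOf q (one + de *: w)).
    apply: Hint; rewrite addrAC subrr add0r norm2_scale gtr0_norm // /de.
    rewrite mulrAC ltr_pdivrMr ?ltr_wpDl // ltr_pM2l //.
    by rewrite ltrDl.
  move: (h2 Kz); rewrite (addrC one) -[de *: w]addr0 -addrA add0r.
  rewrite dotE.
  under eq_bigr do rewrite !mxE.
  have h1 := pairK one Kone; rewrite dotE in h1.
  under eq_bigr do rewrite mulrDr.
  rewrite big_split /= h1 addr0.
  under eq_bigr do rewrite mulrCA.
  rewrite -mulr_sumr => /eqP; rewrite mulf_eq0 (gt_eqF de0) /= => /eqP hs.
  apply/matrixP => i j; rewrite (ord1 j) mxE.
  have hs2 : \sum_e0 w e0 0 ^+ 2 = 0.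
    by rewrite -[RHS]hs; apply: eq_bigr => e0 _; rewrite expr2.
  have := @psumr_eq0P _ _ predT _ (fun e0 _ => sqr_ge0 (w e0 0)) hs2 i isT.
  by move/eqP; rewrite sqrf_eq0 => /eqP.
have one0 : one != 0.
  apply/eqP => h; move: pone; rewrite h polyOf0 => /eqP; rewrite eq_sym oner_eq0.
  done.
have [ps Eone] := repr one Kone.
exists ((N%:R + Num.sqrt N%:R + 1)^-1).
  by rewrite invr_gt0 ltr_wpDl // addr_ge0 ?sqrtr_ge0 ?ler0n.
move=> t cstar c y Hb clt Mpd Hg.
have Ku : inWSOS g d (polyOf q (t - cstar *: one)) by apply: Kcl; case: Hb.
have [vs Eu] := repr _ Ku.
have rpos : 0 < cstar - c by rewrite subr_gt0.
have Esu : adjoint A (invmx (A y)) - (t - cstar *: one) = (cstar - c) *: one.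
  move: Hg; rewrite /grad opprK => ->.
  by rewrite scalerBl opprB addrC addrA subrK.
have [dnpos bnd] := core Alin Asym Ainj Mpd Eu Eone one0 rpos Esu.
rewrite invfM invrK ler_pdivlMr //.
by apply: (le_trans bnd); rewrite lerDl.
Qed.
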